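(* For any term $t$, any scalars $\alpha,\beta$, any type $T$ and any context $\Gamma$ of the Scalar type system: if $\Gamma\vdash\alpha.(\beta.t):T$ then $\Gamma\vdash(\alpha\times\beta).t:T$.
   Context: Fix a commutative ring $(\mathcal{S},+,\times)$. Terms: $t,r ::= b \mid (t)\,r \mid \mathbf{0} \mid \alpha.t \mid t+r$, basis terms $b ::= x \mid \lambda x\,t$, modulo associativity and commutativity of $+$. Types: $T ::= U \mid \forall X.T \mid \alpha.T \mid \overline{0}$; unit types: $U ::= X \mid U\to T \mid \forall X.U$. Type variables are only substituted by unit types; $(\alpha.T)[U/X]=\alpha.T[U/X]$. Type equivalence $\equiv$ is the least congruence with $\alpha.\overline0\equiv\overline0$, $0.T\equiv\overline0$, $1.T\equiv T$, $\alpha.(\beta.T)\equiv(\alpha\times\beta).T$, $\forall X.\alpha.T\equiv\alpha.\forall X.T$. A context is a set of distinct term variables with unit types. Typing rules: (ax) $\Gamma,x:U\vdash x:U$; ($\equiv$) from $\Gamma\vdash t:T$ and $T\equiv S$ infer $\Gamma\vdash t:S$; ($\to_E$) from $\Gamma\vdash t:\alpha.(U\to T)$ and $\Gamma\vdash r:\beta.U$ infer $\Gamma\vdash (t)\,r:(\alpha\times\beta).T$; ($\to_I$) from $\Gamma,x:U\vdash t:T$ infer $\Gamma\vdash\lambda x\,t:U\to T$; ($\forall_E$) from $\Gamma\vdash t:\forall X.T$ infer $\Gamma\vdash t:T[U/X]$, $U$ unit; ($\forall_I$) from $\Gamma\vdash t:T$ with $X$ not free in $\Gamma$ infer $\Gamma\vdash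 t:\forall X.T$; ($ax_{\overline0}$) $\Gamma\vdash\mathbf 0:\overline0$; ($+_I$) from $\Gamma\vdash t:\alpha.T$ and $\Gamma\vdash r:\beta.T$ infer $\Gamma\vdash t+r:(\alpha+\beta).T$; ($s_I$) from $\Gamma\vdash t:T$ infer $\Gamma\vdash\alpha.t:\alpha.T$. *)

(* Defs.v *)
From mathcomp Require Import all_boot all_algebra.
Set Implicit Arguments. Unset Strict Implicit. Unset Printing Implicit Defensive.
Import GRing.Theory.
Local Open Scope ring_scope.

Section Scalar.
Variable S : comPzRingType.

(* Terms: b ::= x | \lam x t ; t ::= b | (t) r | 0 | a.t | t + r.
   Term variables are de Bruijn indices (terms are taken up to alpha). *)
Inductive term : Type :=
| Var  of nat
| Lam  of term
| App  of term & term
| Zero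
| Scal of S & term
| Plus of term & term.

(* Terms are considered modulo associativity and commutativity of +:
   ac_eq is the least congruence generated by these two laws. *)
Inductive ac_eq : term -> term -> Prop :=
| ac_refl t : ac_eq t t
| ac_sym t r : ac_eq t r -> ac_eq r t
| ac_trans t r s : ac_eq t r -> ac_eq r s -> ac_eq t s
| ac_comm t r : ac_eq (Plus t r) (Plus r t)
| ac_assoc t r s : ac_eq (Plus (Plus t r) s) (Plus t (Plus r s))
| ac_lam t t' : ac_eq t t' -> ac_eq (Lam t) (Lam t')
| ac_app t t' r r' : ac_eq t t' -> ac_eq r r' -> ac_eq (App t r) (App t' r')
| ac_scal a t t' : ac_eq t t' -> ac_eq (Scal a t) (Scal a t')
| ac_plus t t' r r' : ac_eq t t' -> ac_eq r r' -> ac_eq (Plus t r) (Plus t' r').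

(* Raw type syntax; type variables are de Bruijn indices (TAll binds index 0). *)
Inductive ty : Type :=
| TVar  of nat
| TArr  of ty & ty
| TAll  of ty
| TScal of S & ty
| TZero.

Inductive is_unit : ty -> Prop :=
| u_var n : is_unit (TVar n)
| u_arr U T : is_unit U -> is_type T -> is_unit (TArr U T)
| u_all U : is_unit U -> is_unit (TAll U)
with is_type : ty -> Prop :=
| t_unit U : is_unit U -> is_type U
| t_all T : is_type T -> is_type (TAll T)
| t_scal a T : is_type T -> is_type (TScal a T)
| t_zero : is_type TZero.

Fixpoint tshift (c : nat) (T : ty) : ty :=
  match T with
  | TVar n => if (c <= n)%N then TVar n.+1 else TVar n
  | TArr A B => TArr (tshift c A) (tshift c B)
  | TAll A => TAll (tshift c.+1 A)
  | TScal a A => TScal a (tshift c A)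
  | TZero => TZero
  end.

(* capture-avoiding substitution T[U/k] (removing the binder k) *)
Fixpoint tsubst (k : nat) (U : ty) (T : ty) : ty :=
  match T with
  | TVar n => if n == k then U else if (k < n)%N then TVar n.-1 else TVar n
  | TArr A B => TArr (tsubst k U A) (tsubst k U B)
  | TAll A => TAll (tsubst k.+1 (tshift 0 U) A)
  | TScal a A => TScal a (tsubst k U A)
  | TZero => TZero
  end.

Inductive tequiv : ty -> ty -> Prop :=
| te_refl T : is_type T -> tequiv T T
| te_sym T R : tequiv T R -> tequiv R T
| te_trans T R Q : tequiv T R -> tequiv R Q -> tequiv T Q
| te_scal0 a : tequiv (TScal a TZero) TZero
| te_zero T : is_type T -> tequiv (TScal 0 T) TZero
| te_one T : is_type T -> tequiv (TScal 1 T) T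
| te_mul a b T : is_type T -> tequiv (TScal a (TScal b T)) (TScal (a * b) T)
| te_allscal a T : is_type T -> tequiv (TAll (TScal a T)) (TScal a (TAll T))
| te_arr U U' T T' : is_unit U -> is_unit U' -> tequiv U U' -> tequiv T T' ->
    tequiv (TArr U T) (TArr U' T')
| te_all T T' : tequiv T T' -> tequiv (TAll T) (TAll T')
| te_scalc a T T' : tequiv T T' -> tequiv (TScal a T) (TScal a T').

(* Contexts: lists of (unit) types, de Bruijn; Gamma, x:U is U :: Gamma. *)
Definition ctx := seq ty.

Inductive typing : ctx -> term -> ty -> Prop :=
| ty_ax G n U : onth G n = Some U -> typing G (Var n) U
| ty_equiv G t T R : typing G t T -> tequiv T R -> typing G t R
| ty_arrE G t r a b U T :
    typing G t (TScal a (TArr U T)) -> typing G r (TScal b U) ->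
    typing G (App t r) (TScal (a * b) T)
| ty_arrI G t U T : is_unit U -> typing (U :: G) t T -> typing G (Lam t) (TArr U T)
| ty_allE G t T U : typing G t (TAll T) -> is_unit U -> typing G t (tsubst 0 U T)
| ty_allI G t T : typing (map (tshift 0) G) t T -> typing G t (TAll T)
      (* de Bruijn form of "X not free in Gamma" *)
| ty_ax0 G : typing G Zero TZero
| ty_plusI G t r a b T :
    typing G t (TScal a T) -> typing G r (TScal b T) ->
    typing G (Plus t r) (TScal (a + b) T)
| ty_sI G t a T : typing G t T -> typing G (Scal a t) (TScal a T)
| ty_ac G t t' T : typing G t T -> ac_eq t t' -> typing G t' T
      .

Fixpoint ctx_ok (G : ctx) : Prop := if G is U :: G' then is_unit U /\ ctx_ok G' else True.

End Scalar.

(* Main.v *)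
Require Import Defs.
From mathcomp Require Import all_boot all_algebra.

Section Proofs.
Variable S : comPzRingType.

Lemma unit_scal (a : S) T : ~ is_unit (TScal a T).
Proof. by move=> H; inversion H. Qed.

Lemma type_scal_inv (a : S) T : is_type (TScal a T) -> is_type T.
Proof. move=> H; inversion H; subst => //; inversion H0. Qed.
Arguments type_scal_inv {a T}.


Lemma type_all_inv (T : ty S) : is_type (TAll T) -> is_type T.
Proof.
move=> H; inversion H; subst => //. inversion H0; subst. by apply: t_unit.
Qed.
Arguments type_all_inv {T}.


Lemma type_arr_inv (U T : ty S) : is_type (TArr U T) -> is_unit U /\ is_type T.
Proof. move=> H; inversion H; subst. by inversion H0. Qed.
Arguments type_arr_inv {U T}.


Lemma tshift_wf (T : ty S) : forall c,
  (is_unit T -> is_unit (tshift c T)) /\ (is_type T -> is_type (tshift c T)).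
Proof.
elim: T => [n|A IHA B IHB|A IHA|a A IHA|] c /=.
- case: (c <= n)%N; split=> _; try apply: t_unit; constructor.
- have HU : is_unit (TArr A B) -> is_unit (TArr (tshift c A) (tshift c B)).
    move=> H; inversion H; subst; constructor; [apply (IHA c).1 | apply (IHB c).2]; done.
  split=> // H; apply: t_unit; apply: HU; by case/type_arr_inv: H => ??; constructor.
- split=> H.
  + inversion H; subst; constructor; by apply (IHA c.+1).1.
  + inversion H; subst.
    * inversion H0; subst; apply: t_unit; constructor; by apply (IHA c.+1).1.
    * constructor; by apply (IHA c.+1).2.
- split=> H; first by inversion H.
  constructor; apply (IHA c).2; exact: type_scal_inv H.
- by split=> H; [inversion H | constructor].
Qed.

Lemma tsubst_wf (T : ty S) : forall k U, is_unit U ->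
  (is_unit T -> is_unit (tsubst k U T)) /\ (is_type T -> is_type (tsubst k U T)).
Proof.
elim: T => [n|A IHA B IHB|A IHA|a A IHA|] k U HU /=.
- have H : is_unit (if n == k then U else if (k < n)%N then @TVar S n.-1 else @TVar S n).
    case: (n == k) => //; case: (k < n)%N; constructor.
  by split=> _ //; apply: t_unit.
- have H1 : is_unit (TArr A B) -> is_unit (TArr (tsubst k U A) (tsubst k U B)).
    move=> H; inversion H; subst; constructor;
      [apply (IHA k U HU).1 | apply (IHB k U HU).2]; done.
  split=> // H; apply: t_unit; apply: H1; by case/type_arr_inv: H => ??; constructor.
- have HU' : is_unit (tshift 0 U) by apply (tshift_wf U 0).1.
  split=> H.
  + inversion H; subst; constructor; by apply (IHA _ _ HU').1.
  + inversion H; subst.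
    * inversion H0; subst; apply: t_unit; constructor; by apply (IHA _ _ HU').1.
    * constructor; by apply (IHA _ _ HU').2.
- split=> H; first by inversion H.
  constructor; apply (IHA k U HU).2; exact: type_scal_inv H.
- by split=> H; [inversion H | constructor].
Qed.

Lemma tequiv_wf (T R : ty S) : tequiv T R -> is_type T /\ is_type R.
Proof.
elim=> {T R}.
- by move=> T H; split.
- by move=> T R _ [? ?]; split.
- by move=> T R Q _ [h1 _] _ [_ h2]; split.
- by move=> a; split; [apply: t_scal; apply: t_zero | apply: t_zero].
- by move=> T H; split; [apply: t_scal | apply: t_zero].
- by move=> T H; split; [apply: t_scal|].
- by move=> a b T H; split; apply: t_scal => //; apply: t_scal.
- by move=> a T H; split; [apply: t_all; apply: t_scal | apply: t_scal; apply: t_all].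
- move=> U U' T T' HU HU' _ _ _ [h1 h2]; split; apply: t_unit; constructor; done.
- move=> T T' _ [h1 h2]; split; by constructor.
- move=> a T T' _ [h1 h2]; split; by constructor.
Qed.
Arguments tequiv_wf {T R}.


Fixpoint ctx_ok_map {G : ctx S} : ctx_ok G -> ctx_ok (map (tshift 0) G).
Proof.
case: G => [|U G] //= [HU HG]; split; [exact: (tshift_wf U 0).1 | exact: ctx_ok_map].
Qed.

Lemma ctx_onth (G : ctx S) n U : ctx_ok G -> onth G n = Some U -> is_unit U.
Proof.
elim: G n => [|V G IH] [|n] //= [HV HG]; [by case=> <- | exact: IH].
Qed.
Arguments ctx_onth {G n U}.


Lemma typing_wf G (t : term S) T : typing G t T -> ctx_ok G -> is_type T.
Proof.
elim=> {G t T}.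
- move=> G n U H HG; apply: t_unit; exact: ctx_onth HG H.
- move=> G t T R _ _ HE _; exact: (tequiv_wf HE).2.
- move=> G t r a b U T _ IH _ _ HG; apply: t_scal.
  by case/type_arr_inv: (type_scal_inv (IH HG)).
- move=> G t U T HU _ IH HG; apply: t_unit; constructor => //; apply: IH; by split.
- move=> G t T U _ IH HU HG; apply (tsubst_wf T 0 U HU).2; exact: type_all_inv (IH HG).
- move=> G t T _ IH HG; apply: t_all; apply: IH; exact: ctx_ok_map.
- move=> *; exact: t_zero.
- move=> G t r a b T _ IH _ _ HG; apply: t_scal; exact: type_scal_inv (IH HG).
- move=> G t a T _ IH HG; apply: t_scal; exact: IH.
- by move=> G t t' T _ IH _ HG; apply: IH.
Qed.
Arguments typing_wf {G t T}.


Lemma ac_scal_inv (x y : term S) : ac_eq x y ->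
  (forall b t, x = Scal b t -> exists u, y = Scal b u /\ ac_eq t u) /\
  (forall b t, y = Scal b t -> exists u, x = Scal b u /\ ac_eq u t).
Proof.
elim=> {x y}.
- move=> t; split=> b t0 ->; exists t0; split => //; constructor.
- move=> t r _ [h1 h2]; split=> b t0 E.
  + case: (h2 _ _ E) => u [E1 A1]; exists u; split => //; exact: ac_sym.
  + case: (h1 _ _ E) => u [E1 A1]; exists u; split => //; exact: ac_sym.
- move=> t r s _ [h1 h2] _ [h3 h4]; split=> b t0 E.
  + case: (h1 _ _ E) => u [E1 A1]; case: (h3 _ _ E1) => v [E2 A2].
    exists v; split => //; exact: ac_trans A1 A2.
  + case: (h4 _ _ E) => u [E1 A1]; case: (h2 _ _ E1) => v [E2 A2].
    exists v; split => //; exact: ac_trans A2 A1.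
- by move=> *; split.
- by move=> *; split.
- by move=> *; split.
- by move=> *; split.
- move=> a t t' A _; split=> b t0 [<- <-]; [exists t' | exists t]; split => //.
- by move=> *; split.
Qed.
Arguments ac_scal_inv {x y}.


Lemma inner G (u : term S) T0 : typing G u T0 -> forall a b t,
  ctx_ok G -> ac_eq u (Scal b t) -> typing G (Scal (a * b)%R t) (TScal a T0).
Proof.
elim=> {G u T0}.
- move=> G n U _ a b t _ A; case: ((ac_scal_inv A).2 _ _ erefl) => ? [] //.
- move=> G t T R HT IH HE a b t0 HG A.
  apply: ty_equiv (IH _ _ _ HG A) _; exact: te_scalc.
- move=> G t r a b U T _ _ _ _ a0 b0 t0 _ A; case: ((ac_scal_inv A).2 _ _ erefl) => ? [] //.
- move=> G t U T _ _ _ a0 b0 t0 _ A; case: ((ac_scal_inv A).2 _ _ erefl) => ? [] //.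
- move=> G t T U HT IH HU a b t0 HG A.
  have HT1 : is_type T by apply: type_all_inv (typing_wf HT HG).
  have := IH a b t0 HG A => H.
  have H2 := ty_equiv H (te_sym (te_allscal a HT1)).
  exact: (ty_allE H2 HU).
- move=> G t T HT IH a b t0 HG A.
  have HG' := ctx_ok_map HG.
  have HT1 : is_type T by apply: typing_wf HT HG'.
  exact: ty_equiv (ty_allI (IH a b t0 HG' A)) (te_allscal a HT1).
- move=> G a b t _ A; case: ((ac_scal_inv A).2 _ _ erefl) => ? [] //.
- move=> G t r a b T _ _ _ _ a0 b0 t0 _ A; case: ((ac_scal_inv A).2 _ _ erefl) => ? [] //.
- move=> G t a T HT IH a0 b t0 HG A.
  case: ((ac_scal_inv A).1 _ _ erefl) => u [[<- <-] A'].
  have HT1 : is_type T by apply: typing_wf HT HG.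
  apply: (ty_equiv _ (te_sym (te_mul a0 b HT1))).
  apply: ty_sI; apply: ty_ac HT _; exact: A'.
- move=> G t t' T _ IH A a b t0 HG A'; apply: IH => //; exact: ac_trans A A'.
Qed.
Arguments inner {G u T0}.


Lemma outer G (s : term S) T : typing G s T -> forall a b t,
  ctx_ok G -> ac_eq s (Scal a (Scal b t)) -> typing G (Scal (a * b)%R t) T.
Proof.
elim=> {G s T}.
- move=> G n U _ a b t _ A; case: ((ac_scal_inv A).2 _ _ erefl) => ? [] //.
- move=> G t T R _ IH HE a b t0 HG A; exact: ty_equiv (IH _ _ _ HG A) HE.
- move=> G t r a b U T _ _ _ _ a0 b0 t0 _ A; case: ((ac_scal_inv A).2 _ _ erefl) => ? [] //.
- move=> G t U T _ _ _ a0 b0 t0 _ A; case: ((ac_scal_inv A).2 _ _ erefl) => ? [] //.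
- move=> G t T U _ IH HU a b t0 HG A; exact: ty_allE (IH _ _ _ HG A) HU.
- move=> G t T _ IH a b t0 HG A; apply: ty_allI; apply: IH => //; exact: ctx_ok_map.
- move=> G a b t _ A; case: ((ac_scal_inv A).2 _ _ erefl) => ? [] //.
- move=> G t r a b T _ _ _ _ a0 b0 t0 _ A; case: ((ac_scal_inv A).2 _ _ erefl) => ? [] //.
- move=> G t a T HT _ a0 b t0 HG A.
  case: ((ac_scal_inv A).1 _ _ erefl) => u [[<- E] A']; subst u.
  exact: inner HT a0 b t0 HG A'.
- move=> G t t' T _ IH A a b t0 HG A'; apply: IH => //; exact: ac_trans A A'.
Qed.

Arguments outer {G s T}.
End Proofs.

Theorem mainTheorem10 (S : comPzRingType) (G : ctx S) (t : term S) (a b : S) (T : ty S) :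
  ctx_ok G -> is_type T ->
  typing G (Scal a (Scal b t)) T -> typing G (Scal (a * b)%R t) T.
Proof.
move=> HG _ H; exact: (@outer S G _ T H a b t HG (ac_refl _)).
Qed.
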